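(* If $\mu^\ast$ is an upper quasi-density on $\mathbb{H}$, then $\mu^\ast(X)=0$ for every finite $X\subseteq\mathbb{H}$.
   Context: $\mathbb{N}=\{0,1,2,\dots\}$, $\mathbb{N}^+=\{1,2,\dots\}$; $\mathbb{H}$ is one of $\mathbb{Z},\mathbb{N},\mathbb{N}^+$. For $X\subseteq\mathbb{H}$, $k\in\mathbb{N}^+$, $h\in\mathbb{N}$, $k\cdot X+h:=\{kx+h:x\in X\}$. An upper quasi-density on $\mathbb{H}$ is a function $\mu^\ast:\mathcal{P}(\mathbb{H})\to\mathbb{R}$ with $\mu^\ast(\mathbb{H})=1$, $\mu^\ast(X)\le1$ for all $X$, $\mu^\ast(X\cup Y)\le\mu^\ast(X)+\mu^\ast(Y)$ for all $X,Y$, and $\mu^\ast(k\cdot X+h)=\frac1k\mu^\ast(X)$ for all $X\subseteq\mathbb{H}$, $h,k\in\mathbb{N}^+$. *)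

(* Defs.v *)
From Stdlib Require Import Reals ZArith List.
Open Scope R_scope.

(* The three choices of the ambient set H: Z, N = {0,1,...}, N+ = {1,2,...},
   all realised as subsets of Z. *)
Inductive HKind : Type := HZ | HN | HNpos.

Definition Hset (H : HKind) (z : Z) : Prop :=
  match H with
  | HZ => True
  | HN => (0 <= z)%Z
  | HNpos => (1 <= z)%Z
  end.

Definition subH (H : HKind) (X : Z -> Prop) : Prop := forall z, X z -> Hset H z.

Definition dilate_shift (k h : Z) (X : Z -> Prop) : Z -> Prop :=
  fun z => exists x, X x /\ z = (k * x + h)%Z.

Definition setU (X Y : Z -> Prop) : Z -> Prop := fun z => X z \/ Y z.

Definition finite_set (X : Z -> Prop) : Prop :=
  exists l : list Z, forall z, X z <-> In z l.

(* Upper quasi-density on H: mu is defined on (at least) all subsets of H;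
   only its values on subsets of H matter. *)
Definition upper_quasi_density (H : HKind) (mu : (Z -> Prop) -> R) : Prop :=
  mu (Hset H) = 1 /\
  (forall X, subH H X -> mu X <= 1) /\
  (forall X Y, subH H X -> subH H Y -> mu (setU X Y) <= mu X + mu Y) /\
  (forall X (h k : Z), subH H X -> (1 <= h)%Z -> (1 <= k)%Z ->
     mu (dilate_shift k h X) = / IZR k * mu X).

(* Main.v *)
Require Import Defs.
From Stdlib Require Import Reals ZArith List Lia Lra.
From Stdlib Require Import FunctionalExtensionality PropExtensionality.
Open Scope R_scope.

Lemma set_ext (A B : Z -> Prop) : (forall z, A z <-> B z) -> A = B.
Proof.
  intro E; apply functional_extensionality; intro z;
  apply propositional_extensionality; apply E.
Qed.

Lemma mu_nonneg H mu : upper_quasi_density H mu ->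
  forall X, subH H X -> 0 <= mu X.
Proof.
  intros [_ [_ [Hsub _]]] X HX.
  assert (E : setU X X = X) by (apply set_ext; unfold setU; tauto).
  pose proof (Hsub X X HX HX) as Hs; rewrite E in Hs; lra.
Qed.

Lemma mu_empty H mu : upper_quasi_density H mu -> mu (fun _ => False) = 0.
Proof.
  intros [_ [_ [_ Hd]]].
  assert (E : dilate_shift 2 1 (fun _ => False) = (fun _ => False)).
  { apply set_ext; unfold dilate_shift; firstorder. }
  pose proof (Hd (fun _ => False) 1%Z 2%Z) as K.
  specialize (K (fun z H0 => match H0 with end) ltac:(lia) ltac:(lia)). rewrite E in K.
  assert (IZR 2 = 2) by reflexivity. lra.
Qed.

Lemma mu_single H mu : upper_quasi_density H mu ->
  forall x, Hset H x -> mu (fun z => z = x) = 0.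
Proof.
  intros Hq x Hx. destruct Hq as [A [B [C Hd]]].
  assert (DS : forall k h y, dilate_shift k h (fun z => z = y) = (fun z => z = (k*y+h)%Z)).
  { intros k h y; apply set_ext; unfold dilate_shift; intro z; split.
    - intros [w [-> ->]]; reflexivity.
    - intros ->; exists y; auto. }
  assert (S : forall y, Hset H y -> subH H (fun z => z = y)).
  { intros y Hy z ->; exact Hy. }
  assert (Hy : Hset H (2*x+1)%Z) by (clear -Hx; destruct H; unfold Hset in *; auto; lia).
  pose proof (Hd _ 1%Z 2%Z (S x Hx) ltac:(lia) ltac:(lia)) as K2.
  rewrite DS in K2. assert (IZR 2 = 2) by reflexivity.
  assert (mu (fun z => z = (2*x+1)%Z) = mu (fun z => z = x)) as Eq.
  { destruct (Z.lt_trichotomy (x+1) 0) as [L|[L|L]].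
    - pose proof (Hd _ (-(x+1))%Z 1%Z (S _ Hy) ltac:(lia) ltac:(lia)) as K.
      rewrite DS in K. replace (1 * (2 * x + 1) + - (x + 1))%Z with x in K by lia.
      rewrite K. simpl. lra.
    - replace (2*x+1)%Z with x by lia. reflexivity.
    - pose proof (Hd _ (x+1)%Z 1%Z (S _ Hx) ltac:(lia) ltac:(lia)) as K.
      rewrite DS in K. replace (1 * x + (x + 1))%Z with (2*x+1)%Z in K by lia.
      rewrite K. simpl. lra. }
  rewrite Eq in K2. lra.
Qed.

Theorem mainTheorem5 (H : HKind) (mu : (Z -> Prop) -> R) :
  upper_quasi_density H mu ->
  forall X : Z -> Prop, subH H X -> finite_set X -> mu X = 0.
Proof.
  intros Hq X HX [l Hl].
  enough (mu X <= 0) by (pose proof (mu_nonneg H mu Hq X HX); lra).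
  revert X HX Hl. induction l as [|a l IH]; intros X HX Hl.
  - assert (X = fun _ => False) as -> by (apply set_ext; intro z; rewrite Hl; simpl; tauto).
    rewrite (mu_empty H mu Hq); lra.
  - set (X' := fun z => X z /\ In z l).
    assert (Ha : Hset H a) by (apply HX, Hl; left; reflexivity).
    assert (E : X = setU (fun z => z = a) X').
    { apply set_ext; intro z; unfold setU, X'; rewrite Hl; simpl; split.
      - intros [->|I]; [left; reflexivity | right; tauto].
      - intros [->|[_ I]]; [left; reflexivity | tauto]. }
    assert (HX' : subH H X') by (intros z [Xz _]; apply HX, Xz).
    assert (Hl' : forall z, X' z <-> In z l).
    { intro z; unfold X'; split; [tauto|]. intro I; split; [apply Hl; simpl; tauto|exact I]. }
    pose proof (IH X' HX' Hl').
    destruct Hq as [A [B [C D]]] eqn:Hqe.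
    rewrite E. eapply Rle_trans.
    + apply C; [intros z ->; exact Ha | exact HX'].
    + rewrite (mu_single H mu Hq a Ha). lra.
Qed.
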